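(* Let $r\ge 3$ and $0<l<r-1$, and let $d_1,\dots,d_{l-1},d_{l+2},\dots,d_{r-1}\in\{0,1\}$. Then \[ C^{(d_1,\dots,d_{l-1},0,1,d_{l+2},\dots,d_{r-1})}=C^{(d_1,\dots,d_{l-1})}\cdot C^{(1,d_{l+2},\dots,d_{r-1})}. \] Here the left side is a coefficient attached to $\mathbb Z_{\ge0}^r$ (with $r-1$ indices), the first factor to $\mathbb Z_{\ge0}^{l}$ (with $l-1$ indices) and the second to $\mathbb Z_{\ge0}^{r-l}$ (with $r-l-1$ indices).
   Context: Bernoulli numbers $B_n$ are defined by $\sum_{n\ge0}B_n x^n/n! = xe^x/(e^x-1)$ (so $B_1=+1/2$). For $r\ge1$ and a finite set $S\subset\mathbb Z_{\ge0}^r$, put $C(S)=(-1)^r\sum_{(n_1,\dots,n_r)\in S}\prod_{j=1}^r \frac{B_{n_j}}{n_j!}$. For $r\ge1$, $1\le j\le r-1$ define $S^{(0)}_{j,r}=\{(n_1,\dots,n_r)\in\mathbb Z_{\ge0}^r: n_1+\dots+n_r=r,\ n_{j+1}+\dots+n_r\le r-j\}$ and $S^{(1)}_{j,r}=\{(n_1,\dots,n_r)\in\mathbb Z_{\ge0}^r: n_1+\dots+n_r=r,\ n_1+\dots+n_j<j\}$. For $d_1,\dots,d_{r-1}\in\{0,1\}$ let $S^{(d_1,\dots,d_{r-1})}=\bigcap_{j=1}^{r-1}S^{(d_j)}_{j,r}$ (for $r=1$ this is $S^{()}=\{(1)\}\subset\mathbb Z_{\ge0}^1$), and $C^{(d_1,\dots,d_{r-1})}=C(S^{(d_1,\dots,d_{r-1})})$.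 In particular $C^{()}=-1/2$. *)

(* Defs.v *)
From mathcomp Require Import all_boot all_order all_algebra.
Set Implicit Arguments. Unset Strict Implicit. Unset Printing Implicit Defensive.
Import Order.TTheory GRing.Theory Num.Theory.
Local Open Scope ring_scope.

(* Bernoulli numbers with B_1 = +1/2, i.e. sum_n B_n x^n/n! = x e^x/(e^x-1).
   Comparing coefficients of x^(m+1)/(m+1)! in
   (e^x - 1) * (sum B_n x^n/n!) = x e^x gives
   sum_{k=0}^{m} 'C(m+1,k) B_k = m+1, i.e.
   B_m = 1 - (m+1)^-1 * sum_{k<m} 'C(m+1,k) B_k.
   bern_seq m is the list [B_0; ...; B_(m-1)]. *)
Fixpoint bern_seq (m : nat) : seq rat :=
  match m with
  | 0%N => [::]
  | m'.+1 => let s := bern_seq m' in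
      rcons s (1 - (m'.+1%:R)^-1 * \sum_(k < m') ('C(m'.+1, k))%:R * s`_k)
  end.

Definition bern (n : nat) : rat := (bern_seq n.+1)`_n.

(* Tuples (n_1,...,n_r) in Z_{>=0}^r with n_1+...+n_r = r have all entries
   <= r, so they are represented faithfully by t : {ffun 'I_r -> 'I_r.+1}
   (0-based index i corresponds to n_(i+1)). *)
Definition tup (r : nat) := {ffun 'I_r -> 'I_r.+1}.

Definition total_r (r : nat) (t : tup r) : bool :=
  (\sum_(i < r) (t i : nat))%N == r.

Definition Ccoef (r : nat) (S : pred (tup r)) : rat :=
  (-1) ^+ r * \sum_(t : tup r | S t) \prod_(j < r) (bern (t j) / ((t j)`!)%:R).

Definition S0 (r j : nat) (t : tup r) : bool :=
  total_r t && ((\sum_(i < r | (j <= i)%N) (t i : nat)) <= r - j)%N.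
Definition S1 (r j : nat) (t : tup r) : bool :=
  total_r t && ((\sum_(i < r | (i < j)%N) (t i : nat)) < j)%N.
Definition Sdj (d : bool) (r j : nat) (t : tup r) : bool :=
  if d then S1 j t else S0 j t.

(* For d = [:: d_1; ...; d_(r-1)], r := size d + 1,
   S^(d) = intersection over 1 <= j <= r-1 of S^(d_j)_{j,r}
   (for r = 1 this is the set of tuples of total 1, i.e. {(1)}). *)
Definition Sd (d : seq bool) (t : tup (size d).+1) : bool :=
  total_r t &&
  [forall j : 'I_(size d).+1, (0 < j)%N ==> Sdj (nth false d j.-1) j t].

Definition Cd (d : seq bool) : rat := Ccoef (@Sd d).

(* Main.v *)
Require Import Defs.
From mathcomp Require Import all_boot all_order all_algebra.
From mathcomp Require Import zify.
Import GRing.Theory.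
Set Implicit Arguments. Unset Strict Implicit. Unset Printing Implicit Defensive.
Local Open Scope ring_scope.

Definition sq (n : nat) (t : tup n.+1) : seq nat :=
  mkseq (fun k => nat_of_ord (t (inord k))) n.+1.

Lemma size_sq n (t : tup n.+1) : size (sq t) = n.+1.
Proof. by rewrite size_mkseq. Qed.

Lemma nth_sq n (t : tup n.+1) k : (k < n.+1)%N -> nth 0%N (sq t) k = t (inord k).
Proof. by move=> hk; rewrite nth_mkseq. Qed.

Lemma nth_sq_ord n (t : tup n.+1) (i : 'I_n.+1) : nth 0%N (sq t) i = t i.
Proof. by rewrite nth_sq // inord_val. Qed.

Lemma sumn_nth (s : seq nat) : sumn s = (\sum_(i < size s) nth 0%N s i)%N.
Proof. by rewrite sumnE (big_nth 0%N) big_mkord. Qed.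

Lemma pre_sum n (t : tup n.+1) k : (k <= n.+1)%N ->
  (\sum_(i < n.+1 | (i < k)%N) (t i : nat))%N = sumn (take k (sq t)).
Proof.
move=> hk.
rewrite (eq_bigr (fun i : 'I_n.+1 => nth 0%N (sq t) i)); last by move=> i _; rewrite nth_sq_ord.
rewrite -(big_ord_widen _ (fun i => nth 0%N (sq t) i) hk) sumn_nth size_take size_sq.
have -> : (if (k < n.+1)%N then k else n.+1) = k by case: ifP => //; lia.
by apply: eq_bigr => i _; rewrite nth_take.
Qed.

Lemma tot_sum n (t : tup n.+1) :
  (\sum_(i < n.+1) (t i : nat))%N = sumn (sq t).
Proof.
rewrite -(take_size (sq t)) size_sq -pre_sum //.
by apply: eq_bigl => i; rewrite ltn_ord.
Qed.

Lemma S1E n (t : tup n.+1) j : (j <= n.+1)%N ->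
  S1 j t = total_r t && (sumn (take j (sq t)) < j)%N.
Proof. by move=> hj; rewrite /S1 pre_sum. Qed.

Lemma S0E n (t : tup n.+1) j : (j <= n.+1)%N -> total_r t ->
  S0 j t = (j <= sumn (take j (sq t)))%N.
Proof.
move=> hj ht; rewrite /S0 ht /=.
move: ht; rewrite /total_r (bigID (fun i : 'I_n.+1 => (i < j)%N)) /= => /eqP.
rewrite pre_sum //.
rewrite (eq_bigl (fun i : 'I_n.+1 => (j <= i)%N)); last by move=> i; rewrite -leqNgt.
move=> e; apply/idP/idP; lia.
Qed.

Definition cnd (b : bool) (x j : nat) : bool := if b then (x < j)%N else (j <= x)%N.
Definition SP (d : seq bool) (s : seq nat) : Prop :=
  sumn s = (size d).+1 /\ forall j, (0 < j)%N -> (j < (size d).+1)%N ->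
    cnd (nth false d j.-1) (sumn (take j s)) j.

Lemma SdP (d : seq bool) (t : tup (size d).+1) : @Sd d t <-> SP d (sq t).
Proof.
rewrite /Sd /total_r tot_sum; split.
  move=> /andP [/eqP tot /forallP H]; split => // j j0 jR.
  have := H (Ordinal jR); rewrite /= j0 /= /Sdj.
  case: (nth false d j.-1) => /=.
    by rewrite S1E ?(ltnW jR) // => /andP [].
  by rewrite S0E ?(ltnW jR) // /total_r tot_sum tot.
move=> [tot H]; rewrite tot eqxx /=; apply/forallP => j; apply/implyP => j0.
have := H j j0 (ltn_ord j); rewrite /Sdj /cnd.
case: (nth false d j.-1).
  by rewrite S1E ?(ltnW (ltn_ord j)) // /total_r tot_sum tot eqxx.
by rewrite S0E ?(ltnW (ltn_ord j)) // /total_r tot_sum tot eqxx.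
Qed.

Lemma cnd_add b x j m : cnd b (m + x) (m + j) = cnd b x j.
Proof. by case: b; rewrite /cnd ?ltn_add2l ?leq_add2l. Qed.

Lemma split_SP (a b : seq bool) (s1 s2 : seq nat) :
  size s1 = (size a).+1 -> size s2 = (size b).+2 ->
  SP (a ++ false :: true :: b) (s1 ++ s2) <-> SP a s1 /\ SP (true :: b) s2.
Proof.
move=> h1 h2.
have sd : size (a ++ false :: true :: b) = (size a + (size b).+2)%N by rewrite size_cat.
have lo : forall j, (j < size a)%N ->
    nth false (a ++ false :: true :: b) j = nth false a j.
  by move=> j hj; rewrite nth_cat hj.
have hi : forall k, nth false (a ++ false :: true :: b) ((size a).+1 + k).-1
                    = nth false (false :: true :: b) k.
  by move=> k; rewrite nth_cat ltnNge addSn /= leq_addr /= addKn.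
have tlo : forall j, (j <= (size a).+1)%N -> take j (s1 ++ s2) = take j s1.
  by move=> j hj; rewrite takel_cat // h1.
have thi : forall k, sumn (take ((size a).+1 + k) (s1 ++ s2)) = (sumn s1 + sumn (take k s2))%N.
  by move=> k; rewrite take_cat h1 ltnNge leq_addr /= addKn sumn_cat.
rewrite /SP sd; split.
  move=> [tot H].
  have e0 := H (size a).+1 isT ltac:(lia).
  rewrite -(addn0 (size a).+1) hi thi take0 /= addn0 in e0.
  have e1 := H ((size a).+1 + 1)%N ltac:(lia) ltac:(lia).
  rewrite hi thi /cnd /= in e1.
  rewrite sumn_cat in tot.
  have es1 : sumn s1 = (size a).+1 by rewrite /cnd /= in e0; lia.
  split; split.
  - by [].
  - move=> j j0 ja.
    have := H j j0 ltac:(lia).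
    by rewrite tlo; [rewrite lo //; lia | lia].
  - by rewrite /=; lia.
  - move=> [|k] //= _ kb.
    have := H ((size a).+1 + k.+1)%N ltac:(lia) ltac:(lia).
    by rewrite hi thi es1 cnd_add.
move=> [[t1 H1] [t2 H2]]; split.
  by rewrite sumn_cat t1 t2 /=; lia.
move=> j j0 jd.
case: (ltnP j (size a).+1) => ja.
  by rewrite tlo; [rewrite lo; [apply: H1 | lia] | lia].
have -> : j = ((size a).+1 + (j - (size a).+1))%N by lia.
rewrite hi thi t1.
case ek: (j - (size a).+1)%N => [|k].
  by rewrite take0 /cnd /=; lia.
rewrite cnd_add; apply: H2 => //=; lia.
Qed.

Lemma nth_le_sumn (s : seq nat) k : (nth 0%N s k <= sumn s)%N.
Proof.
elim: s k => [|x s IH] [|k] //=; first by rewrite leq_addr.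
exact: leq_trans (IH k) (leq_addl _ _).
Qed.

Definition hh (a b : seq bool) (p : tup (size a).+1 * tup (size (true :: b)).+1)
  : tup (size (a ++ false :: true :: b)).+1 :=
  [ffun i : 'I_(size (a ++ false :: true :: b)).+1 =>
     inord (if (i < (size a).+1)%N then (p.1 (inord i) : nat)
            else (p.2 (inord (i - (size a).+1)) : nat))].

Definition hh' (a b : seq bool) (t : tup (size (a ++ false :: true :: b)).+1)
  : tup (size a).+1 * tup (size (true :: b)).+1 :=
  ([ffun i : 'I_(size a).+1 => inord (t (inord i))],
   [ffun i : 'I_(size (true :: b)).+1 => inord (t (inord (i + (size a).+1)))]).

Lemma sq_hh (a b : seq bool) (p : tup (size a).+1 * tup (size (true :: b)).+1) :
  sq (hh p) = sq p.1 ++ sq p.2.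
Proof.
have sd : size (a ++ false :: true :: b) = (size a + (size b).+2)%N by rewrite size_cat.
apply: (@eq_from_nth _ 0%N).
  by rewrite [RHS]size_cat !size_sq sd /=; lia.
move=> k; rewrite size_sq => hk.
rewrite nth_sq // /hh ffunE (inordK hk) nth_cat size_sq.
case: ifP => hkN.
  rewrite nth_sq // inordK //.
  by have := ltn_ord (p.1 (inord k)); rewrite sd; lia.
rewrite nth_sq /=; last by rewrite sd in hk; lia.
rewrite inordK //.
by have := ltn_ord (p.2 (inord (k - (size a).+1))); rewrite sd /=; lia.
Qed.

Lemma sq_inj n (t1 t2 : tup n.+1) : sq t1 = sq t2 -> t1 = t2.
Proof.
move=> e; apply/ffunP => i; apply: val_inj.
by have := congr1 (fun s => nth 0%N s i) e; rewrite /= !nth_sq_ord.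
Qed.

Lemma hh'K (a b : seq bool) (p : tup (size a).+1 * tup (size (true :: b)).+1) :
  hh' (hh p) = p.
Proof.
have sd : size (a ++ false :: true :: b) = (size a + (size b).+2)%N by rewrite size_cat.
have E : forall k, (k < (size (a ++ false :: true :: b)).+1)%N ->
    (hh p (inord k) : nat) = nth 0%N (sq p.1 ++ sq p.2) k.
  by move=> k hk; rewrite -sq_hh nth_sq.
case: p E => p1 p2 E; rewrite /hh'; congr pair; apply/ffunP => i; rewrite ffunE.
  apply: val_inj; rewrite /= E; last by rewrite sd; have := ltn_ord i; lia.
  by rewrite nth_cat size_sq ltn_ord nth_sq_ord inord_val.
apply: val_inj; rewrite /= E; last by rewrite sd; have := ltn_ord i; rewrite /=; lia.
rewrite nth_cat size_sq ltnNge leq_addl /= addnK.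
by rewrite nth_sq_ord inord_val.
Qed.

Lemma hhK (a b : seq bool) (t : tup (size (a ++ false :: true :: b)).+1) :
  @Sd _ t -> hh (hh' t) = t.
Proof.
have sd : size (a ++ false :: true :: b) = (size a + (size b).+2)%N by rewrite size_cat.
move=> /SdP.
rewrite -(cat_take_drop (size a).+1 (sq t)) => /split_SP [].
- by rewrite size_take size_sq sd; case: ifP => //; lia.
- by rewrite size_drop size_sq sd; lia.
move=> [s1 _] [s2 _].
apply: sq_inj; rewrite sq_hh -[RHS](cat_take_drop (size a).+1 (sq t)).
congr cat.
  apply: (@eq_from_nth _ 0%N).
    by rewrite size_take !size_sq sd; case: ifP => //; lia.
  move=> k; rewrite size_sq => hk.
  rewrite nth_take // nth_sq // ffunE (inordK hk) inordK.
    rewrite nth_sq ?inordK //; rewrite sd; lia.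
  rewrite -nth_sq; last by rewrite sd; lia.
  rewrite -(nth_take _ hk); have := nth_le_sumn (take (size a).+1 (sq t)) k.
  by rewrite s1.
apply: (@eq_from_nth _ 0%N).
  by rewrite size_drop !size_sq sd /=; lia.
move=> k; rewrite size_sq => hk.
rewrite nth_drop nth_sq // ffunE (inordK hk) inordK.
  rewrite nth_sq ?(addnC k) //; rewrite sd /= in hk *; lia.
rewrite -nth_sq; last by rewrite sd /= in hk *; lia.
rewrite addnC -nth_drop; have := nth_le_sumn (drop (size a).+1 (sq t)) k.
by rewrite s2.
Qed.

Definition W (s : seq nat) : rat := \prod_(x <- s) (bern x / (x`!)%:R).

Lemma prodE n (t : tup n.+1) :
  \prod_(j < n.+1) (bern (t j) / ((t j)`!)%:R) = W (sq t).
Proof.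
rewrite /W /sq /mkseq big_map.
have -> : iota 0 n.+1 = index_iota 0 n.+1 by rewrite /index_iota subn0.
by rewrite big_mkord; apply: eq_bigr => i _; rewrite inord_val.
Qed.

Theorem theorem2p3 (r l : nat) (a b : seq bool) :
  (3 <= r)%N -> (0 < l)%N -> (l < r - 1)%N ->
  size a = (l - 1)%N -> size b = (r - l - 2)%N ->
  Cd (a ++ false :: true :: b) = Cd a * Cd (true :: b).
Proof.
move=> _ _ _ _ _.
rewrite /Cd /Ccoef.
rewrite mulrACA.
have -> : (-1) ^+ (size (a ++ false :: true :: b)).+1 =
    (-1) ^+ (size a).+1 * (-1) ^+ (size (true :: b)).+1 :> rat.
  by rewrite -exprD size_cat /=; congr (_ ^+ _); lia.
congr (_ * _).
rewrite (eq_bigr (fun t => W (sq t))); last by move=> t _; rewrite prodE.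
rewrite (reindex_onto (@hh a b) (@hh' a b)); last by move=> t; apply: hhK.
rewrite big_distrlr /=.
rewrite pair_big_dep.
apply: eq_big.
  move=> [p1 p2] /=; rewrite hh'K eqxx andbT.
  apply/idP/andP.
    by move=> /SdP; rewrite sq_hh => /split_SP [] //; rewrite ?size_sq // => /SdP h1 /SdP h2.
  by move=> [/SdP h1 /SdP h2]; apply/SdP; rewrite sq_hh; apply/split_SP; rewrite ?size_sq.
move=> [p1 p2] _ /=; rewrite sq_hh /W big_cat /= !prodE.
by [].
Qed.
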